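(* Let $p,q\geq1$ be integers and $\alpha_0=\arctan\sqrt{q/p}$. Consider the differential system $$\dot\vartheta=3\sin\vartheta\cos\vartheta\sin(\alpha-\vartheta),\qquad \dot\alpha=q\cos\alpha\cos\vartheta-p\sin\alpha\sin\vartheta$$ on the region $R=R_1\cup R_2$, where $R_1=\{(\vartheta,\alpha):0\leq\vartheta\leq\pi/2,\ \vartheta-\pi/2\leq\alpha\leq\vartheta+\pi/2\}$ and $R_2=\{(\vartheta,\alpha):0\leq\vartheta\leq\pi/2,\ \vartheta+\pi/2\leq\alpha\leq\vartheta+3\pi/2\}$. Its stationary points in $R$ are $$P_0=(\alpha_0,\alpha_0),\ P_1=(\alpha_0,\alpha_0+\pi),\ Q_1=(0,\pi/2),\ Q_2=(0,3\pi/2),\ Q_3=(\pi/2,0),\ Q_4=(\pi/2,\pi).$$ Moreover, $P_0$ is a spiral sink if $p+q\leq17$, while it is a nodal sink if $p+q\geq18$; $P_1$ is a spiral source if $p+q\leq17$, while it is a nodal source if $p+q\geq18$. All the other stationary points are saddle points. *)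

(* Defs.v *)
From Stdlib Require Import Reals ZArith List.
From Coquelicot Require Import Coquelicot.
Open Scope R_scope.

Definition theta_dot (p q : R) (th al : R) : R :=
  3 * sin th * cos th * sin (al - th).
Definition alpha_dot (p q : R) (th al : R) : R :=
  q * cos al * cos th - p * sin al * sin th.

Definition inR1 (th al : R) : Prop :=
  0 <= th <= PI / 2 /\ th - PI / 2 <= al <= th + PI / 2.
Definition inR2 (th al : R) : Prop :=
  0 <= th <= PI / 2 /\ th + PI / 2 <= al <= th + 3 * PI / 2.
Definition inR (th al : R) : Prop := inR1 th al \/ inR2 th al.

Definition stationary (p q th al : R) : Prop :=
  theta_dot p q th al = 0 /\ alpha_dot p q th al = 0.

(* 2x2 real matrices ((a, b), (c, d)) = [[a, b], [c, d]]. *)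
Definition mat2 := ((R * R) * (R * R))%type.

Definition jacobian (p q th al : R) : mat2 :=
  ((Derive (fun t => theta_dot p q t al) th, Derive (fun a => theta_dot p q th a) al),
   (Derive (fun t => alpha_dot p q t al) th, Derive (fun a => alpha_dot p q th a) al)).

Definition is_eigenvalue (M : mat2) (l : C) : Prop :=
  match M with
  | ((a, b), (c, d)) =>
      Cminus (Cmult (Cminus (RtoC a) l) (Cminus (RtoC d) l)) (Cmult (RtoC b) (RtoC c)) = RtoC 0
  end.

Definition spiral_sink (M : mat2) : Prop :=
  forall l, is_eigenvalue M l -> Im l <> 0 /\ Re l < 0.
Definition spiral_source (M : mat2) : Prop :=
  forall l, is_eigenvalue M l -> Im l <> 0 /\ 0 < Re l.
Definition nodal_sink (M : mat2) : Prop :=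
  forall l, is_eigenvalue M l -> Im l = 0 /\ Re l < 0.
Definition nodal_source (M : mat2) : Prop :=
  forall l, is_eigenvalue M l -> Im l = 0 /\ 0 < Re l.
Definition saddle (M : mat2) : Prop :=
  exists l1 l2, is_eigenvalue M l1 /\ is_eigenvalue M l2 /\
    Im l1 = 0 /\ Im l2 = 0 /\ Re l1 < 0 < Re l2.

Definition alpha0 (p q : R) : R := atan (sqrt (q / p)).

Definition P0 (p q : R) : R * R := (alpha0 p q, alpha0 p q).
Definition P1 (p q : R) : R * R := (alpha0 p q, alpha0 p q + PI).
Definition Q1 : R * R := (0, PI / 2).
Definition Q2 : R * R := (0, 3 * PI / 2).
Definition Q3 : R * R := (PI / 2, 0).
Definition Q4 : R * R := (PI / 2, PI).

Definition stat_points (p q : R) : list (R * R) := P0 p q :: P1 p q :: Q1 :: Q2 :: Q3 :: Q4 :: nil.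

Definition jac_at (p q : R) (P : R * R) : mat2 := jacobian p q (fst P) (snd P).

(* Main.v *)
Require Import Defs.
From Stdlib Require Import Reals ZArith List Lra Psatz.
From Coquelicot Require Import Coquelicot.
Open Scope R_scope.

Lemma d11 p q th al : Derive (fun t => theta_dot p q t al) th =
  3*cos th*cos th*sin(al-th) - 3*sin th*sin th*sin(al-th) - 3*sin th*cos th*cos(al-th).
Proof. apply is_derive_unique. unfold theta_dot. auto_derive; auto. unfold Rminus; ring. Qed.
Lemma d12 p q th al : Derive (fun a => theta_dot p q th a) al = 3*sin th*cos th*cos(al-th).
Proof. apply is_derive_unique. unfold theta_dot. auto_derive; auto. unfold Rminus; ring. Qed.
Lemma d21 p q th al : Derive (fun t => alpha_dot p q t al) th = - q*cos al*sin th - p*sin al*cos th.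
Proof. apply is_derive_unique. unfold alpha_dot. auto_derive; auto. unfold Rminus; ring. Qed.
Lemma d22 p q th al : Derive (fun a => alpha_dot p q th a) al = - q*sin al*cos th - p*cos al*sin th.
Proof. apply is_derive_unique. unfold alpha_dot. auto_derive; auto. unfold Rminus; ring. Qed.

Lemma eig_eq a b c d x y : is_eigenvalue ((a,b),(c,d)) (x,y) ->
  (a-x)*(d-x) - y*y - b*c = 0 /\ y*(a+d-2*x) = 0.
Proof. unfold is_eigenvalue, Cminus, Cmult, Cplus, Copp, RtoC; simpl. intro H.
 injection H; intros; split; nra. Qed.

Lemma spiral_gen a b c d : (a+d)^2 - 4*(a*d-b*c) < 0 ->
  forall x y, is_eigenvalue ((a,b),(c,d)) (x,y) -> y <> 0 /\ x = (a+d)/2.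
Proof. intros Hd x y H. apply eig_eq in H. destruct H as [H1 H2].
 destruct (Req_dec y 0) as [Hy|Hy].
 - subst y; exfalso. pose proof (pow2_ge_0 (2*x-a-d)). nra.
 - split; auto. destruct (Rmult_integral _ _ H2); [contradiction|lra]. Qed.

Lemma nodal_gen a b c d : (a+d)^2 - 4*(a*d-b*c) > 0 ->
  forall x y, is_eigenvalue ((a,b),(c,d)) (x,y) -> y = 0 /\ x*x - (a+d)*x + (a*d-b*c) = 0.
Proof. intros Hd x y H. apply eig_eq in H. destruct H as [H1 H2].
 destruct (Req_dec y 0) as [Hy|Hy].
 - subst y. split; auto. nra.
 - exfalso. destruct (Rmult_integral _ _ H2); [contradiction|].
   assert (x = (a+d)/2) by lra. subst x. nra. Qed.

Lemma spiral_sink_gen a b c d : a+d < 0 -> (a+d)^2 - 4*(a*d-b*c) < 0 ->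
  spiral_sink ((a,b),(c,d)).
Proof. intros Ht Hd [x y] H. destruct (spiral_gen a b c d Hd x y H). simpl. split; auto. lra. Qed.
Lemma spiral_source_gen a b c d : a+d > 0 -> (a+d)^2 - 4*(a*d-b*c) < 0 ->
  spiral_source ((a,b),(c,d)).
Proof. intros Ht Hd [x y] H. destruct (spiral_gen a b c d Hd x y H). simpl. split; auto. lra. Qed.
Lemma nodal_sink_gen a b c d : a+d < 0 -> a*d-b*c > 0 -> (a+d)^2 - 4*(a*d-b*c) > 0 ->
  nodal_sink ((a,b),(c,d)).
Proof. intros Ht HD Hd [x y] H. destruct (nodal_gen a b c d Hd x y H). simpl. split; auto. nra. Qed.
Lemma nodal_source_gen a b c d : a+d > 0 -> a*d-b*c > 0 -> (a+d)^2 - 4*(a*d-b*c) > 0 ->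
  nodal_source ((a,b),(c,d)).
Proof. intros Ht HD Hd [x y] H. destruct (nodal_gen a b c d Hd x y H). simpl. split; auto. nra. Qed.

Lemma saddle_gen a c d : (a < 0 < d \/ d < 0 < a) -> saddle ((a,0),(c,d)).
Proof. intros [H|H].
 - exists (RtoC a), (RtoC d). unfold is_eigenvalue, Cminus, Cmult, Cplus, Copp, RtoC; simpl.
   repeat split; try lra; f_equal; ring.
 - exists (RtoC d), (RtoC a). unfold is_eigenvalue, Cminus, Cmult, Cplus, Copp, RtoC; simpl.
   repeat split; try lra; f_equal; ring. Qed.

Lemma cos2k k : cos (2 * IZR k * PI) = 1 /\ sin (2 * IZR k * PI) = 0.
Proof. assert (H : sin (IZR k * PI) = 0) by (apply sin_eq_0_1; eauto).
 replace (2 * IZR k * PI) with (2 * (IZR k * PI)) by ring.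
 rewrite cos_2a_sin, sin_2a, H. split; ring. Qed.
Lemma sin_perZ x k : sin (x + 2*IZR k*PI) = sin x.
Proof. rewrite sin_plus. destruct (cos2k k) as [-> ->]. ring. Qed.
Lemma cos_perZ x k : cos (x + 2*IZR k*PI) = cos x.
Proof. rewrite cos_plus. destruct (cos2k k) as [-> ->]. ring. Qed.

Lemma a0_facts pr qr : pr > 0 -> qr > 0 ->
  0 < alpha0 pr qr < PI/2 /\ 0 < sin (alpha0 pr qr) /\ 0 < cos (alpha0 pr qr) /\
  qr * cos (alpha0 pr qr) * cos (alpha0 pr qr) = pr * sin (alpha0 pr qr) * sin (alpha0 pr qr).
Proof. intros Hp Hq.
 assert (Hqp : 0 < qr / pr) by (apply Rdiv_lt_0_compat; auto).
 assert (Hs : 0 < sqrt (qr/pr)) by (apply sqrt_lt_R0; auto).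
 assert (Ha1 : 0 < alpha0 pr qr).
 { unfold alpha0. rewrite <- atan_0. apply atan_increasing; auto. }
 assert (Ha2 : alpha0 pr qr < PI/2).
 { unfold alpha0. destruct (atan_bound (sqrt (qr/pr))). lra. }
 pose proof PI_RGT_0.
 assert (Hsin : 0 < sin (alpha0 pr qr)) by (apply sin_gt_0; lra).
 assert (Hcos : 0 < cos (alpha0 pr qr)) by (apply cos_gt_0; lra).
 repeat split; auto; try lra.
 assert (Ht : tan (alpha0 pr qr) = sqrt (qr/pr)) by (unfold alpha0; apply tan_atan).
 unfold tan in Ht.
 assert (E : sin (alpha0 pr qr) = cos (alpha0 pr qr) * sqrt (qr/pr)).
 { rewrite <- Ht. field. lra. }
 rewrite E. replace (pr * (cos (alpha0 pr qr) * sqrt (qr / pr)) * (cos (alpha0 pr qr) * sqrt (qr / pr)))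
   with (pr * cos (alpha0 pr qr) * cos (alpha0 pr qr) * (sqrt (qr / pr) * sqrt (qr/pr))) by ring.
 rewrite sqrt_sqrt by lra. field. lra. Qed.

Lemma stat_per pr qr th al k : stationary pr qr th (al + 2*IZR k*PI) -> stationary pr qr th al.
Proof. unfold stationary, theta_dot, alpha_dot.
 replace (al + 2 * IZR k * PI - th) with ((al - th) + 2*IZR k*PI) by ring.
 rewrite sin_perZ, cos_perZ, sin_perZ. auto. Qed.

Lemma stat_list pr qr : pr > 0 -> qr > 0 ->
  forall P, In P (stat_points pr qr) -> stationary pr qr (fst P) (snd P).
Proof. intros Hp Hq P HP. destruct (a0_facts pr qr Hp Hq) as [Ha [Hs [Hc Hrel]]].
 unfold stat_points in HP. simpl in HP.
 unfold stationary, theta_dot, alpha_dot.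
 repeat destruct HP as [HP|HP]; try contradiction; subst P; simpl;
 unfold P0, P1, Q1, Q2, Q3, Q4; simpl.
 - rewrite Rminus_diag, sin_0. split; [ring|lra].
 - replace (alpha0 pr qr + PI - alpha0 pr qr) with PI by ring. rewrite sin_PI, neg_cos, neg_sin.
   split; [ring|lra].
 - rewrite sin_0, cos_PI2. split; ring.
 - replace (3 * PI / 2) with (3 * (PI/2)) by field. rewrite sin_0, cos_3PI2. split; ring.
 - rewrite cos_PI2, sin_0. split; ring.
 - rewrite cos_PI2, sin_PI. split; ring.
Qed.

Lemma th_alpha0 pr qr th : pr > 0 -> qr > 0 -> 0 < th < PI/2 ->
  qr * cos th * cos th - pr * sin th * sin th = 0 -> th = alpha0 pr qr.
Proof. intros Hp Hq Hth H. pose proof PI_RGT_0.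
 assert (Hs : 0 < sin th) by (apply sin_gt_0; lra).
 assert (Hc : 0 < cos th) by (apply cos_gt_0; lra).
 assert (E : qr / pr = Rsqr (tan th)).
 { unfold Rsqr, tan. field_simplify_eq; try lra. }
 unfold alpha0. rewrite E, sqrt_Rsqr. 
 - rewrite atan_tan; auto. lra.
 - unfold tan. apply Rlt_le, Rdiv_lt_0_compat; auto.
Qed.


Lemma stat_fwd pr qr th al : pr > 0 -> qr > 0 -> inR th al -> stationary pr qr th al ->
  exists k : Z, In (th, al + 2 * IZR k * PI) (stat_points pr qr).
Proof. intros Hp Hq HR [H1 H2]. pose proof PI_RGT_0.
 assert (Hth : 0 <= th <= PI/2) by (destruct HR as [[? ?]|[? ?]]; lra).
 assert (Hal : th - PI/2 <= al <= th + 3*(PI/2)) by (destruct HR as [[? ?]|[? ?]]; lra).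
 clear HR. unfold theta_dot, alpha_dot in *.
 assert (Hc : sin th = 0 \/ cos th = 0 \/ sin (al - th) = 0).
 { destruct (Rmult_integral _ _ H1) as [Ha|Ha]; auto.
   destruct (Rmult_integral _ _ Ha) as [Hb|Hb]; auto.
   destruct (Rmult_integral _ _ Hb) as [Hd|Hd]; auto. lra. }
 unfold stat_points; simpl.
 destruct Hc as [Hc|[Hc|Hc]].
 - assert (th = 0).
   { destruct (Req_dec th 0); auto. assert (0 < sin th) by (apply sin_gt_0; lra). lra. }
   subst th. rewrite sin_0, cos_0 in H2.
   assert (Hca : cos al = 0) by (apply (Rmult_eq_reg_l qr); lra).
   assert (al = -(PI/2) \/ al = PI/2 \/ al = 3*(PI/2)).
   { destruct (Req_dec al (-(PI/2))); auto. destruct (Req_dec al (PI/2)); auto.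
     destruct (Req_dec al (3*(PI/2))); auto. exfalso.
     destruct (Rlt_or_le al (PI/2)).
     + assert (0 < cos al) by (apply cos_gt_0; lra). lra.
     + assert (cos al < 0) by (apply cos_lt_0; lra). lra. }
   destruct H0 as [ -> | [ -> | -> ] ].
   + exists 1%Z. right; right; right; left. unfold Q2. f_equal. simpl. field.
   + exists 0%Z. right; right; left. unfold Q1. f_equal. simpl. field.
   + exists 0%Z. right; right; right; left. unfold Q2. f_equal. simpl. field.
 - assert (th = PI/2).
   { destruct (Req_dec th (PI/2)); auto. assert (0 < cos th) by (apply cos_gt_0; lra). lra. }
   subst th. rewrite sin_PI2, cos_PI2 in H2.
   assert (Hsa : sin al = 0) by (apply (Rmult_eq_reg_l pr); lra).
   assert (al = 0 \/ al = PI \/ al = 2*PI).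
   { destruct (Req_dec al 0); auto. destruct (Req_dec al PI); auto.
     destruct (Req_dec al (2*PI)); auto. exfalso.
     destruct (Rlt_or_le al PI).
     + assert (0 < sin al) by (apply sin_gt_0; lra). lra.
     + assert (sin al < 0) by (apply sin_lt_0; lra). lra. }
   destruct H0 as [ -> | [ -> | -> ] ].
   + exists 0%Z. right; right; right; right; left. unfold Q3. f_equal. simpl. field.
   + exists 0%Z. right; right; right; right; right; left. unfold Q4. f_equal. simpl. field.
   + exists (-1)%Z. right; right; right; right; left. unfold Q3. f_equal. simpl. field.
 - assert (al - th = 0 \/ al - th = PI).
   { destruct (Req_dec (al - th) 0); auto. destruct (Req_dec (al-th) PI); auto. exfalso.
     destruct (Rlt_or_le (al - th) 0).
     + assert (sin (al - th) < 0) by (apply sin_lt_0_var; lra). lra.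
     + destruct (Rlt_or_le (al - th) PI).
       * assert (0 < sin (al-th)) by (apply sin_gt_0; lra). lra.
       * assert (sin (al-th) < 0) by (apply sin_lt_0; lra). lra. }
   assert (Hkey : qr * cos th * cos th - pr * sin th * sin th = 0).
   { destruct H0 as [E|E].
     - replace al with th in H2 by lra. lra.
     - replace al with (th + PI) in H2 by lra. rewrite neg_cos, neg_sin in H2. lra. }
   assert (Hth2 : 0 < th < PI/2).
   { split.
     - destruct (Req_dec th 0) as [E|E]; [|lra]. subst th. rewrite sin_0, cos_0 in Hkey. lra.
     - destruct (Req_dec th (PI/2)) as [E|E]; [|lra]. rewrite E, sin_PI2, cos_PI2 in Hkey. lra. }
   pose proof (th_alpha0 pr qr th Hp Hq Hth2 Hkey) as Ea.
   exists 0%Z. destruct H0 as [E|E].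
   + left. unfold P0. rewrite <- Ea. f_equal. simpl. lra.
   + right; left. unfold P1. rewrite <- Ea. f_equal. simpl. lra.
Qed.

Lemma saddle_gen' a b c d : b = 0 -> (a < 0 < d \/ d < 0 < a) -> saddle ((a,b),(c,d)).
Proof. intros ->. apply saddle_gen. Qed.

Theorem lemma4p6 (p q : nat) (hp : (1 <= p)%nat) (hq : (1 <= q)%nat) :
  let pr := INR p in let qr := INR q in
  (* the six points lie in R *)
  (forall P, In P (stat_points pr qr) -> inR (fst P) (snd P)) /\
  (* the stationary points in R are exactly these (alpha taken mod 2 pi) *)
  (forall th al, inR th al ->
     (stationary pr qr th al <->
      exists k : Z, In (th, al + 2 * IZR k * PI) (stat_points pr qr))) /\
  ((p + q <= 17)%nat -> spiral_sink (jac_at pr qr (P0 pr qr))) /\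
  ((18 <= p + q)%nat -> nodal_sink (jac_at pr qr (P0 pr qr))) /\
  ((p + q <= 17)%nat -> spiral_source (jac_at pr qr (P1 pr qr))) /\
  ((18 <= p + q)%nat -> nodal_source (jac_at pr qr (P1 pr qr))) /\
  saddle (jac_at pr qr Q1) /\ saddle (jac_at pr qr Q2) /\
  saddle (jac_at pr qr Q3) /\ saddle (jac_at pr qr Q4).
Proof.
 intros pr qr.
 assert (Hp : 1 <= pr) by (unfold pr; apply (le_INR 1 p) in hp; simpl in hp; exact hp).
 assert (Hq : 1 <= qr) by (unfold qr; apply (le_INR 1 q) in hq; simpl in hq; exact hq).
 assert (Hp0 : pr > 0) by lra. assert (Hq0 : qr > 0) by lra.
 pose proof PI_RGT_0 as HPI.
 destruct (a0_facts pr qr Hp0 Hq0) as [Ha [Hs [Hc Hrel]]].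
 assert (Hsc : 0 < sin (alpha0 pr qr) * cos (alpha0 pr qr)) by nra.
 assert (N17 : (p + q <= 17)%nat -> pr + qr <= 17).
 { intro H. unfold pr, qr. rewrite <- plus_INR. replace 17 with (INR 17) by (simpl; ring).
   apply le_INR; auto. }
 assert (N18 : (18 <= p + q)%nat -> 18 <= pr + qr).
 { intro H. unfold pr, qr. rewrite <- plus_INR. replace 18 with (INR 18) by (simpl; ring).
   apply le_INR; auto. }
 assert (JP0 : jac_at pr qr (P0 pr qr) =
   ((- 3 * (sin (alpha0 pr qr) * cos (alpha0 pr qr)), 3 * (sin (alpha0 pr qr) * cos (alpha0 pr qr))),
    (-(pr+qr) * (sin (alpha0 pr qr) * cos (alpha0 pr qr)), -(pr+qr) * (sin (alpha0 pr qr) * cos (alpha0 pr qr))))).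
 { unfold jac_at, jacobian, P0. cbn [fst snd]. rewrite d11, d12, d21, d22, Rminus_diag, sin_0, cos_0.
   f_equal; f_equal; ring. }
 assert (JP1 : jac_at pr qr (P1 pr qr) =
   ((3 * (sin (alpha0 pr qr) * cos (alpha0 pr qr)), - 3 * (sin (alpha0 pr qr) * cos (alpha0 pr qr))),
    ((pr+qr) * (sin (alpha0 pr qr) * cos (alpha0 pr qr)), (pr+qr) * (sin (alpha0 pr qr) * cos (alpha0 pr qr))))).
 { unfold jac_at, jacobian, P1. cbn [fst snd]. rewrite d11, d12, d21, d22.
   replace (alpha0 pr qr + PI - alpha0 pr qr) with PI by ring.
   rewrite sin_PI, cos_PI, neg_cos, neg_sin.
   f_equal; f_equal; ring. }
 set (u := sin (alpha0 pr qr) * cos (alpha0 pr qr)) in *.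
 refine (conj _ (conj _ (conj _ (conj _ (conj _ (conj _ (conj _ (conj _ (conj _ _))))))))).
 - intros P HP. unfold stat_points in HP. simpl in HP.
   repeat destruct HP as [HP|HP]; try contradiction; subst P;
   unfold P0, P1, Q1, Q2, Q3, Q4, inR, inR1, inR2; cbn [fst snd].
   + left. lra.
   + right. lra.
   + left. lra.
   + right. lra.
   + left. lra.
   + left. lra.
 - intros th al HR. split.
   + intros Hst. apply stat_fwd; auto.
   + intros [k Hk]. apply (stat_per pr qr th al k).
     apply (stat_list pr qr Hp0 Hq0 _ Hk).
 - intro H. apply N17 in H. rewrite JP0. apply spiral_sink_gen.
   + nra.
   + match goal with |- ?e < 0 => replace e with (u^2*((pr+qr)^2-18*(pr+qr)+9)) by ring end.
     assert (0 <= (pr+qr-1)*(17-(pr+qr))) by (apply Rmult_le_pos; lra).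
     assert ((pr+qr)^2-18*(pr+qr)+9 < 0) by nra. nra.
 - intro H. apply N18 in H. rewrite JP0. apply nodal_sink_gen.
   + nra.
   + nra.
   + match goal with |- ?e > 0 => replace e with (u^2*((pr+qr)^2-18*(pr+qr)+9)) by ring end.
     assert (0 <= (pr+qr-18)*(pr+qr)) by (apply Rmult_le_pos; lra).
     assert ((pr+qr)^2-18*(pr+qr)+9 > 0) by nra. nra.
 - intro H. apply N17 in H. rewrite JP1. apply spiral_source_gen.
   + nra.
   + match goal with |- ?e < 0 => replace e with (u^2*((pr+qr)^2-18*(pr+qr)+9)) by ring end.
     assert (0 <= (pr+qr-1)*(17-(pr+qr))) by (apply Rmult_le_pos; lra).
     assert ((pr+qr)^2-18*(pr+qr)+9 < 0) by nra. nra.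
 - intro H. apply N18 in H. rewrite JP1. apply nodal_source_gen.
   + nra.
   + nra.
   + match goal with |- ?e > 0 => replace e with (u^2*((pr+qr)^2-18*(pr+qr)+9)) by ring end.
     assert (0 <= (pr+qr-18)*(pr+qr)) by (apply Rmult_le_pos; lra).
     assert ((pr+qr)^2-18*(pr+qr)+9 > 0) by nra. nra.
 - unfold jac_at, jacobian, Q1. cbn [fst snd]. rewrite d11, d12, d21, d22.
   replace (PI/2 - 0) with (PI/2) by ring. rewrite sin_0, cos_0, sin_PI2, cos_PI2.
   apply saddle_gen'. ring. right. lra.
 - unfold jac_at, jacobian, Q2. cbn [fst snd]. rewrite d11, d12, d21, d22.
   replace (3*PI/2 - 0) with (3*(PI/2)) by field. replace (3*PI/2) with (3*(PI/2)) by field.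
   rewrite sin_0, cos_0, sin_3PI2, cos_3PI2.
   apply saddle_gen'. ring. left. lra.
 - unfold jac_at, jacobian, Q3. cbn [fst snd]. rewrite d11, d12, d21, d22.
   replace (0 - PI/2) with (-(PI/2)) by ring. rewrite sin_neg, sin_0, cos_0, sin_PI2, cos_PI2.
   apply saddle_gen'. ring. right. lra.
 - unfold jac_at, jacobian, Q4. cbn [fst snd]. rewrite d11, d12, d21, d22.
   replace (PI - PI/2) with (PI/2) by field. rewrite sin_PI, cos_PI, sin_PI2, cos_PI2.
   apply saddle_gen'. ring. left. lra.
Qed.
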